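(* Let $G$ be a graph without isolated vertices and $T$ a solution counting decision tree for $\varphi(G)$. Let $u$ be a node of $T$ labelled by a variable $x$ that is not forced to $1$ by $A_u$, and let $vp$ and $vn$ be the heads of the outgoing edges of $u$ labelled $x$ and $\neg x$ respectively. Let $S\subseteq V(G)$ contain a neighbour $y$ of $x$, and let $p$ be the weight of the edge $(u,vp)$. Then $p\,\alpha^{vp}(S)+(1-p)\,\alpha^{vn}(S\setminus\{y\})\leq\alpha^u(S)$.
   Context: $\varphi(G)$ is the CNF on variables $V(G)$ with clauses $(u\vee v)$ for $\{u,v\}\in E(G)$. Boolean functions are identified with their sets of satisfying assignments (sets of literals); $F|_S$ is the function on the remaining variables whose satisfying assignments are the $S'$ with $S\cup S'$ satisfying $F$; $|\cdot|$ counts satisfying assignments. Decision tree for $F$ (not constant false): root labelled by some $x\in Var(F)$; for each literal $\ell\in\{x,\neg x\}$ occurring in some satisfying assignment, an outgoing edge labelled $\ell$ whose head is a leaf if $|Var(F)|=1$ and otherwise the root of a decision tree for $F|_\ell$. A solution counting decision tree additionally gives the edge leaving node $w$ with label $\ell$ the weight $|F|_{A_w\cup\{\ell\}}|/|F|_{A_w}|$, where $A_w$ is the set of literals labelling the root-$w$ path. A variable $z$ is forced to $1$ by $A_w$ if some neighbour $z'$ of $z$ in $G$ has $\neg z'\in A_w$. $N^w(z)$ is the set of neighbours of $z$ that do not occur in $A_w$ and are not forced to $1$ by $A_w$. For $d\geq 0$, $c_d=1-2^{-(2d+1)}$, and $\alpha^w(S)=\prod_{z\in S}c_{|N^w(z)|}$.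 *)

(* Defs.v *)
From mathcomp Require Import all_boot all_order all_algebra.
Set Implicit Arguments. Unset Strict Implicit. Unset Printing Implicit Defensive.
Import Order.TTheory GRing.Theory Num.Theory.
Local Open Scope ring_scope.

Section Defs.
Variable V : finType.

Definition simple_graph (e : rel V) : Prop :=
  symmetric e /\ irreflexive e.

Definition no_isolated (e : rel V) : Prop := forall v : V, exists w, e v w.

Definition phi (e : rel V) (a : {ffun V -> bool}) : bool :=
  [forall u, forall v, e u v ==> (a u || a v)].

(* A set of literals on distinct variables = a partial assignment:
   A v = Some true  <-> literal v in A,
   A v = Some false <-> literal (~ v) in A,
   A v = None       <-> v does not occur in A. *)
Definition pasg := V -> option bool.

Definition pempty : pasg := fun _ => None.

(* A u {l} where l is the literal x (b = true) or ~x (b = false). *)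
Definition padd (A : pasg) (x : V) (b : bool) : pasg :=
  fun v => if v == x then Some b else A v.

Definition extends (A : pasg) (a : {ffun V -> bool}) : bool :=
  [forall v, if A v is Some b then a v == b else true].

(* |phi(G)|_A| : satisfying assignments S' of the remaining variables with
   A u S' satisfying phi(G), i.e. total extensions of A satisfying phi(G). *)
Definition nsol (e : rel V) (A : pasg) : nat :=
  #|[set a : {ffun V -> bool} | phi e a && extends A a]|.

Definition nvars (A : pasg) : nat := #|[set v | A v == None]|.

(* Decision trees: a leaf, or a node labelled by a variable with an optional
   outgoing edge labelled x (first) and an optional edge labelled ~x. *)
Inductive dtree := DLeaf | DNode of V & option dtree & option dtree.

Fixpoint dtree_for (e : rel V) (A : pasg) (t : dtree) {struct t} : Prop :=
  match t with
  | DLeaf => False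
  | DNode x tp tn =>
      [/\ 0 < nsol e A, A x = None,
          (match tp with
           | None => nsol e (padd A x true) = 0%N
           | Some c => 0 < nsol e (padd A x true) /\
                       (if nvars A == 1%N then c = DLeaf
                        else dtree_for e (padd A x true) c)
           end) &
          (match tn with
           | None => nsol e (padd A x false) = 0%N
           | Some c => 0 < nsol e (padd A x false) /\
                       (if nvars A == 1%N then c = DLeaf
                        else dtree_for e (padd A x false) c)
           end)]
  end%N.

(* Nodes of a tree are addressed by the sequence of edge labels from the root
   (true = positive literal edge, false = negative literal edge).
   [node_at A t p] = Some (A_w, subtree rooted at w). *)
Fixpoint node_at (A : pasg) (t : dtree) (p : seq bool) : option (pasg * dtree) :=
  match p with
  | [::] => Some (A, t)
  | b :: p' =>
      match t with
      | DLeaf => None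
      | DNode x tp tn =>
          match (if b then tp else tn) with
          | None => None
          | Some c => node_at (padd A x b) c p'
          end
      end
  end.

Definition weight (R : fieldType) (e : rel V) (A : pasg) (x : V) (b : bool) : R :=
  (nsol e (padd A x b))%:R / (nsol e A)%:R.

Definition forced (e : rel V) (A : pasg) (z : V) : bool :=
  [exists z', e z z' && (A z' == Some false)].

Definition Nw (e : rel V) (A : pasg) (z : V) : {set V} :=
  [set z' | e z z' && (A z' == None) && ~~ forced e A z'].

Definition cd (R : fieldType) (d : nat) : R := 1 - ((2 ^ (2 * d + 1))%N%:R)^-1.

Definition alpha (R : fieldType) (e : rel V) (A : pasg) (S : {set V}) : R :=
  \prod_(z in S) cd R #|Nw e A z|.

End Defs.

(* Main.v *)
Require Import Defs.
From mathcomp Require Import all_boot all_order all_algebra.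
From mathcomp Require Import lra zify.
Import Order.TTheory GRing.Theory Num.Theory.
Local Open Scope ring_scope.

Lemma pow_pos d : (0 < 2 ^ (2 * d + 1))%N.
Proof. by rewrite expn_gt0. Qed.

Lemma cd_ge0 (R : realFieldType) d : 0 <= cd R d.
Proof.
rewrite /cd subr_ge0 invf_le1 ?ltr0n ?pow_pos //.
by rewrite ler1n pow_pos.
Qed.

Lemma cd_mono (R : realFieldType) d1 d2 : (d1 <= d2)%N -> cd R d1 <= cd R d2.
Proof.
move=> le; rewrite /cd lerB // lef_pV2 ?posrE ?ltr0n ?pow_pos // ler_nat.
by rewrite leq_pexp2l // leq_add2r leq_mul2l le orbT.
Qed.

Lemma cd_S (R : realFieldType) d :
  cd R d.+1 = 1 - ((2 ^ (2 * d + 1))%N%:R)^-1 / 4.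
Proof.
rewrite /cd; congr (_ - _).
have -> : (2 * d.+1 + 1 = (2 * d + 1).+2)%N by rewrite mulnS; lia.
rewrite !expnS mulnA natrM invfM mulrC; congr (_ * _).
Qed.
Set Implicit Arguments.
Section H.
Variable V : finType.
Implicit Types (A : pasg V) (t : dtree V).

Lemma node_at_cat A t p q :
  node_at A t (p ++ q) =
  match node_at A t p with Some (B, t') => node_at B t' q | None => None end.
Proof.
elim: p A t => [|b p IH] A t; first by case: t.
case: t => [|x tp tn] //=.
case: (if b then tp else tn) => [c|] //=; exact: IH.
Qed.

Lemma node_at_for e A t p B x tp tn :
  dtree_for e A t -> node_at A t p = Some (B, DNode x tp tn) ->
  dtree_for e B (DNode x tp tn).
Proof.
elim: p A t => [|b p IH] A t.
  by case: t => [|? ? ?] //= H [<- <- <- <-].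
case: t => [|x' tp' tn'] // [_ _ Hp Hn].
have Hc : forall c, (if b then tp' else tn') = Some c ->
   (if nvars A == 1%N then c = DLeaf V else dtree_for e (padd A x' b) c).
  by move=> c; case: b => /= E; [move: Hp | move: Hn]; rewrite E; case.
case E: (if b then tp' else tn') => [c|] //=; rewrite E //.
move: (Hc c E); case: (nvars A == 1%N).
  by move=> ->; case: p {IH}.
by move=> Hd; apply: IH.
Qed.

Lemma extends_padd A x b (a : {ffun V -> bool}) : A x = None ->
  extends (padd A x b) a = (a x == b) && extends A a.
Proof.
move=> Ax; rewrite /extends /padd.
apply/forallP/andP => [H|[H1 /forallP H2] v].
  split; first by move: (H x); rewrite eqxx.
  apply/forallP => v; move: (H v); case: eqP => [->|] //; by rewrite Ax.
by case: eqP => [->|] //; exact: H2.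
Qed.

Lemma nsol_split e A x : A x = None ->
  nsol e A = (nsol e (padd A x true) + nsol e (padd A x false))%N.
Proof.
move=> Ax; rewrite /nsol.
rewrite -(cardID [set a : {ffun V -> bool} | a x]).
congr (_ + _)%N; apply: eq_card => a; rewrite !inE !extends_padd //.
- by case: (a x); rewrite ?andbT ?andbF.
- by case: (a x); rewrite ?andbT ?andbF.
Qed.

Lemma nsol_le e A x : A x = None ->
  (nsol e (padd A x false) <= nsol e (padd A x true))%N.
Proof.
move=> Ax; rewrite /nsol.
set D := [set a : {ffun V -> bool} | phi e a && extends (padd A x false) a].
set f := fun a : {ffun V -> bool} => [ffun v => if v == x then true else a v].
rewrite -(card_in_imset (f := f) (D := D)); last first.
  move=> a b; rewrite !inE => /andP [_ /forallP Ha] /andP [_ /forallP Hb] Hf.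
  apply/ffunP => v; have := congr1 (fun g : {ffun V -> bool} => g v) Hf.
  rewrite /f !ffunE; case: eqP => [->|] // _.
  move: (Ha x) (Hb x); rewrite /padd eqxx => /eqP -> /eqP -> //.
apply: subset_leq_card; apply/subsetP => _ /imsetP [a Ha ->].
move: Ha; rewrite !inE => /andP [/forallP Hphi /forallP Hext].
apply/andP; split.
  apply/forallP => u; apply/forallP => v; apply/implyP => euv.
  move: (Hphi u) => /forallP /(_ v) /implyP /(_ euv).
  rewrite /f !ffunE; case: (u == x); case: (v == x) => //; by rewrite orbT.
apply/forallP => v; move: (Hext v); rewrite /f /padd ffunE.
by case: eqP.
Qed.

Lemma forced_padd e A x b z : A x = None -> forced e A z -> forced e (padd A x b) z.
Proof.
move=> Ax /existsP [z' /andP [ez Hz]]; apply/existsP; exists z'.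
rewrite ez /padd; case: (z' =P x) => [E|_] //; by rewrite E Ax in Hz.
Qed.

Lemma Nw_sub e A x b z : A x = None -> Nw e (padd A x b) z \subset Nw e A z.
Proof.
move=> Ax; apply/subsetP => z'; rewrite !inE => /andP [/andP [ez Hn] Hf].
rewrite ez /=; apply/andP; split.
  by move: Hn; rewrite /padd; case: (z' =P x).
by apply: contra Hf; apply: forced_padd.
Qed.

End H.
Unset Implicit Arguments.

Theorem lemma14 (R : realFieldType) (V : finType) (e : rel V)
    (T : dtree V) (pu : seq bool) (Au : pasg V) (x : V)
    (tp tn : option (dtree V)) (Avp Avn : pasg V) (vp vn : dtree V)
    (S : {set V}) (y : V) :
  simple_graph e -> no_isolated e ->
  dtree_for e (@pempty V) T ->
  node_at (@pempty V) T pu = Some (Au, DNode x tp tn) ->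
  ~~ forced e Au x ->
  node_at (@pempty V) T (rcons pu true) = Some (Avp, vp) ->
  node_at (@pempty V) T (rcons pu false) = Some (Avn, vn) ->
  y \in S -> e x y ->
  let p : R := weight R e Au x true in
  p * alpha R e Avp S + (1 - p) * alpha R e Avn (S :\ y) <= alpha R e Au S.
Proof.
move=> [esym eirr] _ HT Hu nf Hvp Hvn yS exy; cbv zeta; set p := weight R e Au x true.
have [Hpos Ax _ _] := node_at_for e _ _ _ HT Hu.
have EA : forall b A' v', node_at (@pempty V) T (rcons pu b) = Some (A', v') ->
    A' = padd Au x b.
  move=> b A' v'; rewrite -cats1 node_at_cat Hu /=.
  by case: (if b then tp else tn) => [c|] //; case: c => [|? ? ?] /= [<-].
rewrite (EA _ _ _ Hvp) (EA _ _ _ Hvn) {EA Hvp Hvn}.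
have alpha_le : forall b T', alpha R e (padd Au x b) T' <= alpha R e Au T'.
  move=> b T'; apply: ler_prod => z _; rewrite cd_ge0 /=.
  by apply: cd_mono; apply: subset_leq_card; apply: Nw_sub.
have alpha_ge0 : forall A' T', 0 <= alpha R e A' T'.
  by move=> A' T'; apply: prodr_ge0 => z _; apply: cd_ge0.
have xin : x \in Nw e Au y.
  by rewrite inE esym exy Ax eqxx.
have Hprop : Nw e (padd Au x true) y \proper Nw e Au y.
  apply/properP; split; first exact: Nw_sub.
  by exists x => //; rewrite !inE /padd eqxx /= andbF.
have := proper_card Hprop.
case Ed: #|Nw e Au y| => [|d] // Hlt.
rewrite /alpha !(big_setD1 _ yS) /= -!/(alpha R e _ _) Ed.
set a := alpha R e Au (S :\ y).
set X := alpha R e (padd Au x true) (S :\ y).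
set Y := alpha R e (padd Au x false) (S :\ y).
set c' := cd R #|Nw e (padd Au x true) y|.
have hX : X <= a by apply: alpha_le.
have hY : Y <= a by apply: alpha_le.
have hX0 : 0 <= X by apply: alpha_ge0.
have hY0 : 0 <= Y by apply: alpha_ge0.
have ha0 : 0 <= a by apply: alpha_ge0.
have hc0 : 0 <= c' by apply: cd_ge0.
have hc : c' <= cd R d by apply: cd_mono; rewrite -ltnS.
rewrite cd_S.
move: hc; rewrite /cd; set u := ((2 ^ (2 * d + 1))%N%:R)^-1 => hc.
have hu : 0 <= u by rewrite invr_ge0 ler0n.
have Hsplit := nsol_split e _ _ Ax.
have Hle := nsol_le e _ _ Ax.
have hp : 1 / 2 <= p /\ p <= 1.
  rewrite /p /weight Hsplit.
  move: Hpos; rewrite Hsplit.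
  set nT := nsol e (padd Au x true); set nF := nsol e (padd Au x false) => Hpos.
  have hN : (0 : R) < (nT + nF)%N%:R by rewrite ltr0n.
  have hle : (nF%:R : R) <= nT%:R by rewrite ler_nat.
  rewrite natrD in hN *.
  split.
    by rewrite ler_pdivlMr //; lra.
  by rewrite ler_pdivrMr // mul1r; have := ler0n R nF; lra.
case: hp => hp1 hp2.
have h1 : p * (c' * X) <= p * ((1 - u) * a).
  by apply: ler_wpM2l; [lra | apply: ler_pM].
have h2 : (1 - p) * Y <= (1 - p) * a.
  by apply: ler_wpM2l; [lra | ].
have h3 : 0 <= a * u by apply: mulr_ge0.
apply: (le_trans (lerD h1 h2)).
rewrite mulrC; nra.
Qed.
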